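(* Let $R$ be a ring and $x\in R$ a nonunit. Then $x$ is a parameter on $R$ if and only if $\operatorname{ht}xR\ge1$ and $(0:x^n)=(0:x^{n+1})$ for some $n\ge1$.
   Context: All rings are commutative with identity. A parameter on $R$ is a parameter sequence of length one: an element $x$ such that (1) $x$ is weakly proregular, meaning there is $n\ge1$ with $(0:_Rx^n)=(0:_Rx^{n+1})$ (equivalently, for every $n$ there is $m\ge n$ such that the map $(0:_Rx^m)\to(0:_Rx^n)$, $r\mapsto x^{m-n}r$, is zero), (2) $xR\neq R$, and (3) $H^1_x(R)_p\neq0$ for all primes $p\supseteq xR$, where $H^1_x(R)=R_x/\operatorname{im}(R\to R_x)$. *)

(* Defs.v *)
From HB Require Import structures.
From mathcomp Require Import all_boot all_order all_algebra.
Set Implicit Arguments. Unset Strict Implicit. Unset Printing Implicit Defensive.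
Import GRing.Theory.
Local Open Scope ring_scope.

Section Defs.
Variable R : comPzRingType.

Definition is_ideal (I : R -> Prop) : Prop :=
  I 0 /\ (forall a b, I a -> I b -> I (a + b)) /\ (forall r a, I a -> I (r * a)).

Definition is_prime (P : R -> Prop) : Prop :=
  is_ideal P /\ ~ P 1 /\ (forall a b, P (a * b) -> P a \/ P b).

Definition ideal_sub (I J : R -> Prop) : Prop := forall a, I a -> J a.

Definition principal (x : R) : R -> Prop := fun y => exists r, y = x * r.

Definition is_unit (x : R) : Prop := exists y, x * y = 1.

Definition ann (a : R) : R -> Prop := fun r => a * r = 0.

Definition weakly_proregular (x : R) : Prop :=
  exists n : nat, (1 <= n)%N /\ (forall r, ann (x ^+ n) r <-> ann (x ^+ n.+1) r).

Definition prime_height_ge1 (P : R -> Prop) : Prop :=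
  exists Q, is_prime Q /\ ideal_sub Q P /\ ~ ideal_sub P Q.

(* ht I >= 1: every prime containing I has height >= 1
   (ht I = inf of heights of primes containing I). *)
Definition ideal_height_ge1 (I : R -> Prop) : Prop :=
  forall P, is_prime P -> ideal_sub I P -> prime_height_ge1 P.

(* Localization R_x: the element r / x^k is represented by the pair (r, k);
   r/x^k = r'/x^k' in R_x iff x^m (r x^k' - r' x^k) = 0 for some m. *)
Definition Rx_eq (x : R) (r : R) (k : nat) (r' : R) (k' : nat) : Prop :=
  exists m : nat, x ^+ m * (r * x ^+ k' - r' * x ^+ k) = 0.

Definition Rx_in_image (x r : R) (k : nat) : Prop :=
  exists a : R, Rx_eq x r k a 0.

(* H^1_x(R) = R_x / im(R -> R_x): the class of r/x^k is zero iff r/x^k is in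
   the image. The R-module structure: s . [r/x^k] = [(s r)/x^k]. *)
Definition H1_zero (x r : R) (k : nat) : Prop := Rx_in_image x r k.

(* H^1_x(R)_P <> 0: some element [r/x^k] / t of the localization at P is
   nonzero, i.e. no u outside P kills [r/x^k]. *)
Definition H1_loc_nonzero (x : R) (P : R -> Prop) : Prop :=
  exists (r : R) (k : nat), ~ (exists u : R, ~ P u /\ H1_zero x (u * r) k).

(* x is a parameter on R (parameter sequence of length one). *)
Definition parameter (x : R) : Prop :=
  weakly_proregular x /\
  (exists r, ~ principal x r) /\
  (forall P, is_prime P -> ideal_sub (principal x) P -> H1_loc_nonzero x P).

End Defs.

(* Main.v *)
Require Import Defs.
From mathcomp Require Import all_boot all_order all_algebra.
From mathcomp Require classical_sets boolp.
From Stdlib Require Import Classical.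
Local Open Scope ring_scope.

Section Aux.
Set Implicit Arguments.
Variable R : comPzRingType.
Import GRing.Theory.

Lemma prime_pow (P : R -> Prop) (x : R) m : is_prime P -> P (x ^+ m) -> P x.
Proof.
move=> [_ [P1 Pm]]; elim: m => [|m IH]; first by rewrite expr0.
by rewrite exprS => /Pm [|/IH].
Qed.

Lemma ideal_mulr (I : R -> Prop) a r : is_ideal I -> I a -> I (a * r).
Proof. by move=> [_ [_ Im]] Ia; rewrite mulrC; apply: Im. Qed.

Lemma H1_iff (x : R) P : is_prime P -> ideal_sub (principal x) P ->
  H1_loc_nonzero x P <-> ~ (exists v m, ~ P v /\ v * x ^+ m = 0).
Proof.
move=> [PI _] sxP; split.
- move=> [r [k H]] [v [m [Pv e]]]; apply: H; exists v; split => //.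
  rewrite /H1_zero /Rx_in_image /Rx_eq.
  exists 0, m; by rewrite expr0 mulr1 mul0r subr0 mulrA (mulrC _ v) e mul0r.
- move=> H; apply: NNPP => H2; apply: H.
  have [u [Pu [a [m e]]]] : exists u, ~ P u /\ H1_zero x (u * 1) 1.
    by apply: NNPP => H3; apply: H2; exists 1, 1%N.
  exists (u - a * x), m; split.
  + move=> Pv; apply: Pu.
    have -> : u = (u - a * x) + a * x by rewrite subrK.
    apply: PI.2.1 => //; apply: sxP; exists a; exact: mulrC.
  + rewrite mulrC; move: e; by rewrite expr0 !mulr1 expr1.
Qed.

Lemma comb (Q1 Q2 : R -> Prop) a b : is_prime Q1 -> is_prime Q2 ->
  (ideal_sub Q1 Q2 \/ ideal_sub Q2 Q1) -> Q1 (a * b) -> Q2 (a * b) ->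
  ~ Q1 a -> ~ Q2 b -> False.
Proof.
move=> [_ [_ p1]] [_ [_ p2]] [s|s] h1 h2 n1 n2.
- by case: (p1 _ _ h1) => // /s.
- by case: (p2 _ _ h2) => // /s.
Qed.

Lemma exists_minimal_prime (P : R -> Prop) : is_prime P ->
  exists Q, is_prime Q /\ ideal_sub Q P /\
    forall Q', is_prime Q' -> ideal_sub Q' Q -> ideal_sub Q Q'.
Proof.
move=> Pp.
pose T := {Q : R -> Prop | is_prime Q /\ ideal_sub Q P}.
pose t0 : T := exist _ P (conj Pp (fun a h => h)).
pose Rel : rel T := fun Q1 Q2 => boolp.asbool (ideal_sub (sval Q2) (sval Q1)).
have [| | |M HM] := @classical_sets.ZL_preorder T t0 Rel.
- by move=> t; apply/boolp.asboolP.
- move=> r s t /boolp.asboolP h1 /boolp.asboolP h2; apply/boolp.asboolP.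
  by move=> a /h2 /h1.
- move=> A Atot.
  pose L := fun y => P y /\ forall Q : T, A Q -> sval Q y.
  have Lp : is_prime L.
    split; [split; [|split]|split].
    + split; first by case: (Pp) => -[]. by move=> Q _; case: (svalP Q) => -[[]].
    + move=> a b [Pa Qa] [Pb Qb]; split; first by case: (Pp) => -[_ [Pd _]] _; apply: Pd.
      move=> Q AQ; case: (svalP Q) => -[[_ [Qd _]]] _ _; apply: Qd; [apply: Qa|apply: Qb]; done.
    + move=> r a [Pa Qa]; split; first by case: (Pp) => -[_ [_ Pd]] _; apply: Pd.
      move=> Q AQ; case: (svalP Q) => -[[_ [_ Qd]]] _ _; apply: Qd; apply: Qa; done.
    + by case=> P1 _; case: (Pp) => _ [].
    + move=> a b [Pab Qab]; apply: NNPP => /not_or_and [na nb].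
      have wit : forall c, ~ L c -> ~ P c \/ exists Q : T, A Q /\ ~ sval Q c.
        move=> c /not_and_or; case; first by left.
        move=> /not_all_ex_not [Q HQ]; right; exists Q; exact: imply_to_and HQ.
      have subP : forall Q : T, ideal_sub (sval Q) P by move=> Q; case: (svalP Q).
      have prQ : forall Q : T, is_prime (sval Q) by move=> Q; case: (svalP Q).
      case: (wit _ na) => [nPa|[Q1 [AQ1 nQ1]]]; case: (wit _ nb) => [nPb|[Q2 [AQ2 nQ2]]].
      * by apply: (@comb P P a b) => //; left => y.
      * by apply: (@comb P (sval Q2) a b) => //; [right; apply: subP | apply: Qab].
      * by apply: (@comb (sval Q1) P a b) => //; [left; apply: subP | apply: Qab].
      * apply: (@comb (sval Q1) (sval Q2) a b) => //; try by apply: Qab.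
        by case: (Atot _ _ AQ1 AQ2) => /boolp.asboolP; [right|left].
  exists (exist _ L (conj Lp (fun a (h : L a) => proj1 h))) => Q AQ; apply/boolp.asboolP.
  by move=> a [_ h]; apply: h.
- exists (sval M); split; first by case: (svalP M).
  split; first by case: (svalP M).
  move=> Q' pQ' sQ'.
  have sQ'P : ideal_sub Q' P by move=> a /sQ'; case: (svalP M) => _; apply.
  have h := HM (exist _ Q' (conj pQ' sQ'P)).
  by apply/boolp.asboolP; apply: h; apply/boolp.asboolP.
Qed.

Lemma exists_prime_avoid (P : R -> Prop) (x : R) : is_prime P ->
  ~ (exists v m, ~ P v /\ v * x ^+ m = 0) ->
  exists Q, is_prime Q /\ ideal_sub Q P /\ ~ Q x.
Proof.
move=> Pp nk.
have [[P0 [PD PM]] [P1 Pprime]] := Pp.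
pose S := fun s => exists v m, ~ P v /\ s = v * x ^+ m.
have S0 : ~ S 0 by move=> [v [m [Pv e]]]; apply: nk; exists v, m; split.
have SM : forall s t, S s -> S t -> S (s * t).
  move=> s t [v [m [Pv ->]]] [w [n [Pw ->]]]; exists (v * w), (m + n)%N; split.
    by case/Pprime.
  by rewrite exprD mulrACA.
pose T := {I : R -> Prop | is_ideal I /\ forall s, I s -> ~ S s}.
have t0p : is_ideal (fun y : R => y = 0) /\ forall s, s = 0 -> ~ S s.
  split; last by move=> s ->.
  split => //; split; first by move=> a b -> ->; rewrite addr0.
  by move=> r a ->; rewrite mulr0.
pose t0 : T := exist _ _ t0p.
pose Rel : rel T := fun I J => boolp.asbool (ideal_sub (sval I) (sval J)).
have [| | |M HM] := @classical_sets.ZL_preorder T t0 Rel.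
- by move=> t; apply/boolp.asboolP.
- move=> r s t /boolp.asboolP h1 /boolp.asboolP h2; apply/boolp.asboolP.
  by move=> a /h1 /h2.
- move=> A Atot.
  pose U := fun y => y = 0 \/ exists I : T, A I /\ sval I y.
  have Up : is_ideal U /\ forall s, U s -> ~ S s.
    split; last first.
      move=> s [->|[I [AI Is]]] //; by case: (svalP I) => _; apply.
    split; first by left.
    split.
    + move=> a b [->|[I1 [AI1 I1a]]] [->|[I2 [AI2 I2b]]].
      * by left; rewrite addr0.
      * by right; exists I2; rewrite add0r.
      * by right; exists I1; rewrite addr0.
      * case: (Atot _ _ AI1 AI2) => /boolp.asboolP sub.
          right; exists I2; split => //; case: (svalP I2) => -[_ [D _]] _.
          by apply: D => //; apply: sub.
        right; exists I1; split => //; case: (svalP I1) => -[_ [D _]] _.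
        by apply: D => //; apply: sub.
    + move=> r a [->|[I [AI Ia]]]; first by left; rewrite mulr0.
      right; exists I; split => //; case: (svalP I) => -[_ [_ Mu]] _; exact: Mu.
  exists (exist _ U Up) => I AI; apply/boolp.asboolP => y Iy; right; exists I; done.
- case: (svalP M) => QI Qd.
  set Q := sval M in QI Qd HM *.
  have [Q0 [QD QM]] := QI.
  have key : forall a, ~ Q a -> exists s i r, S s /\ Q i /\ s = i + a * r.
    move=> a nQa; apply: NNPP => H.
    pose J := fun y => exists i r, Q i /\ y = i + a * r.
    have Jp : is_ideal J /\ forall s, J s -> ~ S s.
      split; last first.
        move=> s [i [r [Qi e]]] Ss; apply: H; exists s, i, r; done.
      split; first by exists 0, 0; rewrite mulr0 addr0.
      split.
      + move=> y z [i [r [Qi ->]]] [j [t [Qj ->]]]; exists (i + j), (r + t).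
        split; first exact: (QD).
        by rewrite mulrDr addrACA.
      + move=> t y [i [r [Qi ->]]]; exists (t * i), (t * r); split; first exact: (QM).
        by rewrite mulrDr mulrCA.
    have h := HM (exist _ J Jp).
    have : Rel (exist _ J Jp) M.
      apply: h; apply/boolp.asboolP => y Qy; exists y, 0; by rewrite mulr0 addr0.
    move=> /boolp.asboolP sub; apply: nQa; apply: sub; exists 0, 1; by rewrite add0r mulr1.
  exists Q; split; last split.
  + split => //; split.
      move=> Q1; apply: (Qd 1) => //; exists 1, 0%N; by rewrite expr0 mulr1.
    move=> a b Qab; apply: NNPP => /not_or_and [na nb].
    have [s1 [i1 [r1 [S1 [Qi1 e1]]]]] := key _ na.
    have [s2 [i2 [r2 [S2 [Qi2 e2]]]]] := key _ nb.
    apply: (Qd (s1 * s2)); last exact: SM.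
    rewrite e1 mulrDl; apply: (QD); first by rewrite mulrC; apply: (QM).
    rewrite e2 mulrDr; apply: (QD); first by apply: (QM).
    rewrite mulrACA; rewrite mulrC; exact: (QM).
  + move=> a Qa; apply: NNPP => nPa; apply: (Qd a) => //.
    by exists a, 0%N; rewrite expr0 mulr1.
  + move=> Qx; apply: (Qd x) => //; exists 1, 1%N; by rewrite expr1 mul1r.
Qed.

End Aux.

Theorem corollary3p4 (R : comPzRingType) (x : R) (hx : ~ is_unit x) :
  parameter x <->
  (ideal_height_ge1 (principal x) /\
   exists n : nat, (1 <= n)%N /\ (forall r : R, ann (x ^+ n) r <-> ann (x ^+ n.+1) r)).
Proof.
have Px : forall P : R -> Prop, ideal_sub (principal x) P -> P x.
  by move=> P sxP; apply: sxP; exists 1; rewrite GRing.mulr1.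
split.
- move=> [wpr [nu H1]]; split; last exact: wpr.
  move=> P Pp sxP; apply: NNPP => nh.
  have /(H1_iff Pp sxP) nk := H1 P Pp sxP.
  have [Q [Qp [QP nQx]]] := @exists_prime_avoid _ P x Pp nk.
  by apply: nh; exists Q; split => //; split => // /(_ x (Px _ sxP)).
- move=> [ht wpr]; split; first exact: wpr.
  split.
    exists 1 => -[r e]; apply: hx; exists r; by rewrite -e.
  move=> P Pp sxP; apply/(H1_iff Pp sxP) => -[v [m [Pv e]]].
  have [Q [Qp [QP Qmin]]] := exists_minimal_prime Pp.
  have Qx : Q x.
    have [[Q0 [_ QM]] [_ Qpr]] := Qp.
    have : Q (v * x ^+ m) by rewrite e.
    case/Qpr => [/QP //|]; exact: prime_pow.
  have sxQ : ideal_sub (principal x) Q.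
    move=> y [r ->]; have [QI _] := Qp; exact: ideal_mulr.
  have [Q' [Q'p [Q'Q nQQ']]] := ht Q Qp sxQ.
  by apply: nQQ'; apply: Qmin.
Qed.
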